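(* Let $N$ be a connected component of $\partial\Omega$, use Fermi coordinates $(x',x_{n+1})$ on $\Omega_N=\phi_N(N\times[0,r_{\max,N}))$, in which $p(x,\xi)=|\xi|_g^2=\xi_{n+1}^2+g(x,\xi')$ with $g(x,\cdot)$ a quadratic form in $\xi'$. Fix $\delta>0$ and let $f_\delta\in C^\infty([0,r_{\max,N}])$ satisfy $$\delta\le f_\delta(t)-\sup_{\{(x',\xi'):\,g(t,x',\xi')=1\}}\partial_t g(t,x',\xi')\le 2\delta .$$ Define $\psi_N(x_{n+1})=\int_0^{x_{n+1}}e^{\frac12\int_0^s f_\delta(\tau)d\tau}ds$ and $p_{\psi_N}(x,\xi)=p(x,\xi+i\partial_x\psi_N)$. Then there is $C(\delta)>0$ such that $$\{\operatorname{Re}p_{\psi_N},\operatorname{Im}p_{\psi_N}\}(x,\xi)\ge C(\delta)>0\quad\text{for all }(x,\xi)\in\operatorname{Char}(p_{\psi_N})=\{p_{\psi_N}=0\},\ x\in\Omega_N .$$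
   Context: $(\Omega,g)$ is a compact Riemannian manifold with boundary; $\phi_N(x,r)=\exp_x(-r\nu)$ with $\nu$ the unit exterior normal, and $r_{\max,N}$ is the supremum of $r_0$ for which $\phi_N$ is a diffeomorphism of $N\times[0,r_0)$ onto its image. $\{\cdot,\cdot\}$ is the Poisson bracket on $T^*\Omega_N$. Here $\sup_{\{g(t,x',\xi')=1\}}\partial_tg$ is taken over $x'\in N$ and $\xi'$ with $g(t,x',\xi')=1$. *)

(* Defs.v *)
From HB Require Import structures.
From mathcomp Require Import all_boot all_order all_algebra.
From mathcomp Require Import all_classical all_reals all_analysis.
From mathcomp Require Import complex.
Set Implicit Arguments. Unset Strict Implicit. Unset Printing Implicit Defensive.
Import Order.TTheory GRing.Theory Num.Theory.
Import numFieldNormedType.Exports.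
Local Open Scope classical_set_scope.
Local Open Scope ring_scope.

(* Fermi coordinates on Omega_N: a point is x : 'rV_(n.+1); the normal
   coordinate x_{n+1} is stored at index ord0, the tangential coordinates x'
   (coordinates on N) at indices lift ord0 j, j : 'I_n.  Same for xi. *)
Section Fermi.
Variables (R : realType) (n : nat).

Definition ecoord (j : 'I_n.+1) : 'rV[R]_n.+1 := delta_mx 0 j.
Definition nrm (x : 'rV[R]_n.+1) : R := x 0 ord0.
Definition tang (x : 'rV[R]_n.+1) : 'rV[R]_n := \row_j x 0 (lift ord0 j).

Definition gq (G : R -> 'rV[R]_n -> 'M[R]_n) (t : R) (x' xi' : 'rV[R]_n) : R :=
  \sum_(i < n) \sum_(j < n) G t x' i j * xi' 0 i * xi' 0 j.

Definition dtg (G : R -> 'rV[R]_n -> 'M[R]_n) (t : R) (x' xi' : 'rV[R]_n) : R :=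
  derive (fun s => gq G s x' xi') t 1.

Definition dtg_set (G : R -> 'rV[R]_n -> 'M[R]_n) (U : set 'rV[R]_n) (t : R) : set R :=
  [set y | exists x' xi', U x' /\ gq G t x' xi' = 1 /\ y = dtg G t x' xi'].

Definition oint (h : R -> R) (t : R) : R :=
  if 0 <= t then Rintegral lebesgue_measure `[0, t] h
  else - Rintegral lebesgue_measure `[t, 0] h.

Definition psiN (f : R -> R) (s : R) : R :=
  oint (fun u => expR (oint f u / 2)) s.

Definition gradpsi (f : R -> R) (x : 'rV[R]_n.+1) : 'rV[R]_n.+1 :=
  \row_j derive (fun y : 'rV[R]_n.+1 => psiN f (nrm y)) x (ecoord j).

(* holomorphic extension of p(x,xi) = xi_{n+1}^2 + g(x,xi') to complex xi *)
Definition pC (G : R -> 'rV[R]_n -> 'M[R]_n) (x : 'rV[R]_n.+1) (z : 'rV[R[i]]_n.+1) : R[i] :=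
  z 0 ord0 ^+ 2 +
  \sum_(i < n) \sum_(j < n)
     ((G (nrm x) (tang x) i j)%:C)%C * z 0 (lift ord0 i) * z 0 (lift ord0 j).

Definition ppsi (G : R -> 'rV[R]_n -> 'M[R]_n) (f : R -> R) (x xi : 'rV[R]_n.+1) : R[i] :=
  pC G x (\row_j (((xi 0 j)%:C)%C + 'i%C * ((gradpsi f x 0 j)%:C)%C)).

Definition poisson (a b : 'rV[R]_n.+1 -> 'rV[R]_n.+1 -> R)
  (x xi : 'rV[R]_n.+1) : R :=
  \sum_(j < n.+1)
    (derive (a x) xi (ecoord j) * derive (b ^~ xi) x (ecoord j)
     - derive (a ^~ xi) x (ecoord j) * derive (b x) xi (ecoord j)).

End Fermi.

(* Main.v *)
Require Import Defs.
From HB Require Import structures.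
From mathcomp Require Import all_boot all_order all_algebra.
From mathcomp Require Import all_classical all_reals all_analysis.
From mathcomp Require Import complex.
From mathcomp Require Import ring lra.
Import Order.TTheory GRing.Theory Num.Theory.
Import numFieldNormedType.Exports.
Local Open Scope classical_set_scope.
Local Open Scope ring_scope.

Section A.
Variable R : realType.
Notation mu := (@lebesgue_measure R).

Lemma cint (f : R -> R) a b : continuous f -> mu.-integrable `[a, b] (EFin \o f).
Proof.
move=> cf; apply: continuous_compact_integrable; first exact: segment_compact.
exact: continuous_subspaceT.
Qed.

Lemma oint_split (f : R -> R) a t : continuous f -> a <= 0 -> a <= t ->
  oint f t = Rintegral mu `[a, t] f - Rintegral mu `[a, 0] f.
Proof.
move=> cf a0 at_; rewrite /oint; case: ifPn => t0.
  rewrite (@Rintegral_itvB _ f (BLeft a) (BRight t) 0) ?bnd_simp//; last exact: cint.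
  rewrite Rintegral_itv_obnd_cbnd//. apply: (@integrableS _ _ _ mu `[a, t]) => //; [apply: subset_itvr; rewrite bnd_simp|exact: cint].
  by [].
have tl : t < 0 by rewrite ltNge.
rewrite -Rintegral_itv_obnd_cbnd; last first.
  apply: (@integrableS _ _ _ mu `[a, 0]) => //; last exact: cint.
  by apply: subset_itvr; rewrite bnd_simp.
have E := (@Rintegral_itvB _ f (BLeft a) (BRight 0) t (@cint f a 0 cf)).
rewrite !bnd_simp in E; have {}E := E at_ (ltW tl).
rewrite -E opprB //.
Qed.

Lemma oint_derive (f : R -> R) (t : R) : continuous f -> is_derive t (1:R) (oint f) (f t).
Proof.
move=> cf.
pose a := Num.min 0 t - 1.
have m0 : Num.min 0 t <= 0 by rewrite ge_min lexx.
have mt : Num.min 0 t <= t by rewrite ge_min lexx orbT.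
have a0 : a <= 0 by rewrite /a lerBlDr (le_trans m0)// lerDl.
have at_ : a < t by rewrite /a ltrBlDr (le_lt_trans mt)// ltrDl.
have [dF F'] := @continuous_FTC1_closed R f a t (t + 1) (ltr_pwDr ltr01 (lexx t)) (@cint f a (t+1) cf) at_ (cf t).
set F := (fun x => _) in dF F'.
have dF' : is_derive t 1 (F - cst (F 0)) (f t - 0).
  apply: is_deriveB.
  by apply: DeriveDef => //; rewrite -derive1E.
rewrite subr0 in dF'.
apply: near_eq_is_derive dF'.
near=> x; rewrite (@oint_split f a x cf a0) //.
apply: ltW; near: x; exact: lt_nbhsr.
Unshelve. all: by end_near. Qed.

Lemma is_derive1_comp (f g : R -> R) (x df dg : R) :
  is_derive x 1 f df -> is_derive (f x) 1 g dg -> is_derive x 1 (g \o f) (dg * df).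
Proof.
move=> [d1 e1] [d2 e2]; apply: DeriveDef.
  apply/derivable1_diffP; apply: differentiable_comp; exact/derivable1_diffP.
by rewrite -derive1E derive1_comp // !derive1E e1 e2.
Qed.

Lemma is_derive_cont (f : R -> R) (x df : R) : is_derive x 1 f df -> {for x, continuous f}.
Proof. by move=> [d _]; apply: differentiable_continuous; apply/derivable1_diffP. Qed.

Definition hh (f : R -> R) (t : R) := expR (oint f t / 2).

Lemma hh_derive (f : R -> R) (t : R) : continuous f ->
  is_derive t (1:R) (hh f) (hh f t * (f t / 2)).
Proof.
move=> cf.
have d1 : is_derive t (1:R) (fun s => oint f s / 2) (f t / 2).
  have d0 := is_deriveZ (2^-1) (@oint_derive f t cf).
  have E : (2^-1 \*: oint f) = (fun s => oint f s / 2) by apply/funext => s /=; rewrite mulrC.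
  rewrite E in d0; apply: is_derive_eq d0 _; by rewrite mulrC.
have := @is_derive1_comp _ expR _ _ _ d1 (is_derive_expR _).
by [].
Qed.

Lemma psi_derive (f : R -> R) (t : R) : continuous f -> is_derive t (1:R) (psiN f) (hh f t).
Proof.
move=> cf; apply: (@oint_derive (hh f) t).
move=> x; exact: (@is_derive_cont (hh f) x _ (@hh_derive f x cf)).
Qed.

Lemma hh_gt0 (f : R -> R) t : 0 < hh f t.
Proof. exact: expR_gt0. Qed.

Local Open Scope complex_scope.
Lemma sqC (a b : R) : (a%:C + 'i * b%:C)^+2 = (a^+2 - b^+2)%:C + 'i * (2*a*b)%:C.
Proof.
apply/eqP; rewrite eq_complex /=. rewrite /real_complex_def /=.
apply/andP; split; apply/eqP; ring.
Qed.

Lemma ReIm (a b : R) : complex.Re (a%:C + 'i * b%:C) = a /\ complex.Im (a%:C + 'i * b%:C) = b.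
Proof. rewrite /= /real_complex_def /=; split; ring. Qed.

End A.
Arguments hh {R}.
Arguments oint_derive {R}.
Arguments psi_derive {R}.
Arguments hh_derive {R}.
Arguments hh_gt0 {R}.
Arguments is_derive1_comp {R}.

Section B.
Variables (R : realType) (n : nat).
Implicit Types (x y xi eta : 'rV[R]_n.+1).

Definition ReP (G : R -> 'rV[R]_n -> 'M[R]_n) (f : R -> R) y eta : R :=
  eta 0 ord0 ^+ 2 - hh f (nrm y) ^+ 2 + gq G (nrm y) (tang y) (tang eta).
Definition ImP (f : R -> R) y (eta : 'rV[R]_n.+1) : R := 2 * eta 0 ord0 * hh f (nrm y).

Lemma coordE x (s : R) j k : (s *: (@ecoord R n j) + x) 0 k = s * (j == k)%:R + x 0 k.
Proof. by rewrite /ecoord !mxE eqxx /= eq_sym. Qed.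

Lemma nrmE x (s : R) j : nrm (s *: (@ecoord R n j) + x) = s * (j == ord0)%:R + nrm x.
Proof. by rewrite /nrm coordE. Qed.

Lemma tang0E x (s : R) : tang (s *: (@ecoord R n ord0) + x) = tang x.
Proof. by apply/rowP => k; rewrite /tang [LHS]mxE coordE [RHS]mxE (negbTE (neq_lift _ _)) mulr0 add0r. Qed.

Lemma D1 (F : 'rV[R]_n.+1 -> R) x v : derive F x v = derive (fun s : R => F (s *: v + x)) 0 1.
Proof.
rewrite /derive scale0r add0r.
suff -> : (fun h : R => h^-1 *: ((F \o shift x) (h *: v) - F x)) =
  (fun h : R => h^-1 *: (((fun s : R => F (s *: v + x)) \o shift 0) h%:A - F x)) by [].
apply/funext => h /=.
by rewrite addr0 [_%:A]mulr1.
Qed.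


Lemma gradpsiE (f : R -> R) x j : continuous f ->
  gradpsi f x 0 j = if j == ord0 then hh f (nrm x) else 0.
Proof.
move=> cf; rewrite /gradpsi mxE D1.
have -> : (fun s : R => psiN f (nrm (s *: @ecoord R n j + x))) =
   (fun s => psiN f (s * (j == ord0)%:R + nrm x)) by apply/funext => s; rewrite nrmE.
case: eqP => [_|_].
  have -> : (fun s : R => psiN f (s * (true)%:R + nrm x)) = psiN f \o shift (nrm x).
    by apply/funext => s /=; rewrite mulr1.
  have D := is_derive1_comp _ _ 0 _ _ (is_derive_shift 0 1 (nrm x)) (psi_derive f _ cf).
  by rewrite derive_val /= add0r mulr1.
have -> : (fun s : R => psiN f (s * (false)%:R + nrm x)) = cst (psiN f (nrm x)).
  by apply/funext => s /=; rewrite mulr0 add0r.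
exact: derive_cst.
Qed.


Local Open Scope complex_scope.
Lemma ppsiE G (f : R -> R) y eta : continuous f ->
  ppsi G f y eta = (ReP G f y eta)%:C + 'i * (ImP f y eta)%:C.
Proof.
move=> cf.
have zl : forall i, (\row_j ((eta 0 j)%:C + 'i * (gradpsi f y 0 j)%:C)) 0 (lift ord0 i) = (eta 0 (lift ord0 i))%:C.
  move=> i; rewrite mxE gradpsiE //.
  have -> : (lift ord0 i == ord0) = false by rewrite eq_sym (negbTE (neq_lift _ _)).
  by rewrite rmorph0 mulr0 addr0.
have z0 : (\row_j ((eta 0 j)%:C + 'i * (gradpsi f y 0 j)%:C)) 0 ord0 = (eta 0 ord0)%:C + 'i * (hh f (nrm y))%:C.
  by rewrite mxE gradpsiE // eqxx.
rewrite /ppsi /pC z0 sqC /ReP /ImP /gq !rmorphD !rmorph_sum.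
under [in RHS]eq_bigr => i _ do rewrite rmorph_sum.
under [in LHS]eq_bigr => i _ do under eq_bigr => j _ do rewrite !zl.
under [in RHS]eq_bigr => i _ do under eq_bigr => j _ do rewrite !rmorphM /tang !mxE.
by rewrite [RHS]addrAC.
Qed.



Lemma gq_derivable (G : R -> 'rV[R]_n -> 'M[R]_n) (t : R) (x' v : 'rV[R]_n) :
  (forall i j : 'I_n, derivable (fun s => G s x' i j) t 1) ->
  derivable (fun s => gq G s x' v) t 1.
Proof.
move=> dG.
have -> : (fun s => gq G s x' v) =
   \sum_(i < n) \sum_(j < n) (fun s => G s x' i j * v 0 i * v 0 j).
  apply/funext => s; rewrite /gq fct_sumE; apply: eq_bigr => i _.
  by rewrite fct_sumE.
apply: derivable_sum => i; apply: derivable_sum => j.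
have -> : (fun s => G s x' i j * v 0 i * v 0 j) = (fun s => G s x' i j) * cst (v 0 i * v 0 j).
  by apply/funext => s /=; rewrite mulrA.
by apply: derivableM => //; exact: derivable_cst.
Qed.

Lemma gqZ (G : R -> 'rV[R]_n -> 'M[R]_n) (t c : R) (x' v : 'rV[R]_n) :
  gq G t x' (c *: v) = c ^+ 2 * gq G t x' v.
Proof.
rewrite /gq mulr_sumr; apply: eq_bigr => i _; rewrite mulr_sumr; apply: eq_bigr => j _.
by rewrite !mxE; ring.
Qed.

Lemma dtgZ (G : R -> 'rV[R]_n -> 'M[R]_n) (t c : R) (x' v : 'rV[R]_n) :
  derivable (fun s => gq G s x' v) t 1 ->
  dtg G t x' (c *: v) = c ^+ 2 * dtg G t x' v.
Proof.
move=> d; rewrite /dtg.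
have -> : (fun s => gq G s x' (c *: v)) = (c ^+ 2) \*: (fun s => gq G s x' v).
  by apply/funext => s /=; rewrite gqZ.
by rewrite deriveZ.
Qed.


Lemma liftne (i : 'I_n) : (lift ord0 i == ord0 :> 'I_n.+1) = false.
Proof. by rewrite eq_sym (negbTE (neq_lift _ _)). Qed.

Lemma Z1 (f : R -> R) x xi (i : 'I_n) :
  derive (fun y => ImP f y xi) x (@ecoord R n (lift ord0 i)) = 0.
Proof.
rewrite D1.
have -> : (fun s : R => ImP f (s *: @ecoord R n (lift ord0 i) + x) xi) = cst (ImP f x xi).
  by apply/funext => s; rewrite /ImP nrmE liftne mulr0 add0r.
exact: derive_cst.
Qed.

Lemma Z2 (f : R -> R) x xi (i : 'I_n) :
  derive (ImP f x) xi (@ecoord R n (lift ord0 i)) = 0.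
Proof.
rewrite D1.
have -> : (fun s : R => ImP f x (s *: @ecoord R n (lift ord0 i) + xi)) = cst (ImP f x xi).
  by apply/funext => s; rewrite /ImP coordE liftne mulr0 add0r.
exact: derive_cst.
Qed.

Lemma A1 G (f : R -> R) x xi :
  derive (ReP G f x) xi (@ecoord R n ord0) = 2 * xi 0 ord0.
Proof.
rewrite D1.
have -> : (fun s : R => ReP G f x (s *: @ecoord R n ord0 + xi)) =
   (shift (xi 0 ord0)) ^+ 2 + cst (- hh f (nrm x) ^+ 2 + gq G (nrm x) (tang x) (tang xi)).
  by apply/funext => s; rewrite /ReP coordE tang0E eqxx mulr1 /= addrA.
by rewrite derive_val /= add0r expr1 !addr0 [_ *: 1]mulr1.
Qed.


Lemma A2 (f : R -> R) x xi : continuous f ->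
  derive (fun y => ImP f y xi) x (@ecoord R n ord0) = 2 * xi 0 ord0 * (hh f (nrm x) * (f (nrm x) / 2)).
Proof.
move=> cf; rewrite D1.
have -> : (fun s : R => ImP f (s *: @ecoord R n ord0 + x) xi) =
   (2 * xi 0 ord0) \*: (hh f \o shift (nrm x)).
  by apply/funext => s; rewrite /ImP nrmE eqxx mulr1.
have D := is_derive1_comp _ _ 0 _ _ (is_derive_shift 0 1 (nrm x)) (hh_derive f _ cf).
by rewrite derive_val /= add0r mulr1.
Qed.

Lemma A4 (f : R -> R) x xi :
  derive (ImP f x) xi (@ecoord R n ord0) = 2 * hh f (nrm x).
Proof.
rewrite D1.
have -> : (fun s : R => ImP f x (s *: @ecoord R n ord0 + xi)) =
   (2 * hh f (nrm x)) \*: (shift (xi 0 ord0)).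
  by apply/funext => s; rewrite /ImP coordE eqxx mulr1 /= mulrAC.
by rewrite derive_val addr0 [_ *: 1]mulr1.
Qed.

Lemma A3 G (f : R -> R) x xi : continuous f ->
  derivable (fun t => gq G t (tang x) (tang xi)) (nrm x) 1 ->
  derive (fun y => ReP G f y xi) x (@ecoord R n ord0) =
   - (2 * hh f (nrm x) * (hh f (nrm x) * (f (nrm x) / 2))) + dtg G (nrm x) (tang x) (tang xi).
Proof.
move=> cf dg; rewrite D1.
set gqf := (fun t => gq G t (tang x) (tang xi)) in dg *.
have -> : (fun s : R => ReP G f (s *: @ecoord R n ord0 + x) xi) =
   cst (xi 0 ord0 ^+ 2) - (hh f \o shift (nrm x)) ^+ 2 + (gqf \o shift (nrm x)).
  by apply/funext => s; rewrite /ReP nrmE tang0E eqxx mulr1.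
have Dh := is_derive1_comp _ _ 0 _ _ (is_derive_shift 0 1 (nrm x)) (hh_derive f _ cf).
have dg' : is_derive (shift (nrm x) 0) 1 gqf ('D_1 gqf (nrm x)) by rewrite /= add0r; exact: derivableP.
have Dg := is_derive1_comp _ _ 0 _ _ (is_derive_shift 0 1 (nrm x)) dg'.
rewrite derive_val /= !add0r !mulr1 expr1 /dtg.
by rewrite -[in RHS]/gqf.
Qed.


Opaque ReP ImP.
Lemma bracketE G (f : R -> R) x xi : continuous f ->
  derivable (fun t => gq G t (tang x) (tang xi)) (nrm x) 1 ->
  poisson (fun y eta => complex.Re (ppsi G f y eta))
          (fun y eta => complex.Im (ppsi G f y eta)) x xi =
  2 * xi 0 ord0 * (2 * xi 0 ord0 * (hh f (nrm x) * (f (nrm x) / 2))) -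
  (- (2 * hh f (nrm x) * (hh f (nrm x) * (f (nrm x) / 2))) + dtg G (nrm x) (tang x) (tang xi)) *
  (2 * hh f (nrm x)).
Proof.
move=> cf dg.
have ER : (fun y eta => complex.Re (ppsi G f y eta)) = ReP G f.
  apply/funext => y; apply/funext => eta; rewrite ppsiE //.
  exact: (proj1 (@ReIm R (ReP G f y eta) (ImP f y eta))).
have EI : (fun y eta => complex.Im (ppsi G f y eta)) = ImP f.
  apply/funext => y; apply/funext => eta; rewrite ppsiE //.
  exact: (proj2 (@ReIm R (ReP G f y eta) (ImP f y eta))).
rewrite ER EI /poisson big_ord_recl big1; last first.
  by move=> i _; rewrite (Z1 f x xi i) (Z2 f x xi i) mulr0 mulr0 subrr.
rewrite addr0 (A1 G f x xi).
congr (_ * _ - _ * _).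
- exact: (A2 f x xi cf).
- exact: (A3 G f x xi cf dg).
- exact: (A4 f x xi).
Qed.


End B.

Lemma final_ineq (R : realType) (d hc h F S dW : R) : 0 < d -> 0 < hc -> 0 < h ->
  hc ^+ 3 <= h ^+ 3 -> d <= F - S -> dW <= S ->
  2 * d * hc ^+ 3 <= 2 * 0 * (2 * 0 * (h * (F / 2))) - (- (2 * h * (h * (F / 2))) + h ^+ 2 * dW) * (2 * h).
Proof.
move=> d0 hc0 h0 h3 dF dS.
have -> : 2 * 0 * (2 * 0 * (h * (F / 2))) - (- (2 * h * (h * (F / 2))) + h ^+ 2 * dW) * (2 * h)
   = 2 * h ^+ 3 * (F - dW) by field.
have hh3 : 0 <= h ^+ 3 by rewrite exprn_ge0 // ltW.
have e1 : 2 * d * hc ^+ 3 <= 2 * d * h ^+ 3 by rewrite ler_pM2l // mulr_gt0.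
apply: (le_trans e1).
have -> : 2 * d * h ^+ 3 = (2 * h ^+ 3) * d by ring.
by apply: ler_wpM2l; [rewrite mulr_ge0|lra].
Qed.

Transparent ReP ImP.
Arguments ReP {R n}.
Arguments ImP {R n}.

Theorem mainTheorem4 (R : realType) (n : nat) (U : set 'rV[R]_n) (r : R)
  (G : R -> 'rV[R]_n -> 'M[R]_n) (f : R -> R) (delta : R) :
  0 < r -> 0 < delta ->
  (* g is a Riemannian metric on the tangential directions *)
  (forall t x', 0 <= t < r -> U x' -> (G t x')^T = G t x') ->
  (forall t x' v, 0 <= t < r -> U x' -> v != 0 -> 0 < gq G t x' v) ->
  (* differentiability of the metric in the normal variable *)
  (forall t x' (i j : 'I_n), 0 <= t < r -> U x' ->
     derivable (fun s => G s x' i j) t 1) ->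
  (* f_delta regular *)
  continuous f ->
  (* the sup is finite, and the hypothesis on f_delta *)
  (forall t, 0 <= t < r -> has_ubound (dtg_set G U t)) ->
  (forall t, 0 <= t < r ->
     delta <= f t - sup (dtg_set G U t) <= 2 * delta) ->
  exists C : R, 0 < C /\
    forall x xi : 'rV[R]_n.+1, 0 <= nrm x < r -> U (tang x) ->
      ppsi G f x xi = 0 ->
      C <= poisson (fun y eta => complex.Re (ppsi G f y eta))
                   (fun y eta => complex.Im (ppsi G f y eta)) x xi.
Proof.
move=> r0 d0 Gsym Gpos dG cf hub hf.
have [c cI cmin] : exists2 c, c \in `[0, r] & forall t, t \in `[0, r] -> hh f c <= hh f t.
  apply: EVT_min; first exact: ltW.
  apply: continuous_subspaceT => t; exact: (@is_derive_cont R (hh f) t _ (hh_derive f t cf)).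
have hc0 := hh_gt0 f c.
exists (2 * delta * hh f c ^+ 3); split.
  by rewrite !mulr_gt0 // exprn_gt0.
move=> x xi xr Ux Pz.
have dg := @gq_derivable R n G (nrm x) (tang x) (tang xi) (fun i j => dG (nrm x) (tang x) i j xr Ux).
rewrite (@bracketE R n G f x xi cf dg).
have E := @ppsiE R n G f x xi cf. rewrite Pz in E.
have [ER EI] : ReP G f x xi = 0 /\ ImP f x xi = 0.
  have := @ReIm R (ReP G f x xi) (ImP f x xi); rewrite -E /=.
  by case=> <- <-.
set t := nrm x in ER EI xr dg *.
set v := tang xi in ER dg *.
set h := hh f t in ER EI *.
have h0 : 0 < h := hh_gt0 f t.
have xi0 : xi 0 ord0 = 0.
  move: EI; rewrite /ImP => /eqP; rewrite !mulf_eq0 (gt_eqF h0) orbF pnatr_eq0 /=.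
  by move/eqP.
have gE : gq G t (tang x) v = h ^+ 2.
  by move: ER; rewrite /ReP xi0 -/t -/v -/h expr0n /= sub0r => /eqP; rewrite addrC subr_eq0 => /eqP.
set w := h^-1 *: v.
have gw : gq G t (tang x) w = 1.
  by rewrite /w gqZ gE exprVn mulVf // expf_neq0 // gt_eqF.
have Dv : dtg G t (tang x) v = h ^+ 2 * dtg G t (tang x) w.
  by rewrite /w dtgZ // exprVn mulrA divff ?mul1r // expf_neq0 // gt_eqF.
have inS : dtg_set G U t (dtg G t (tang x) w).
  by exists (tang x), w.
have hS : has_sup (dtg_set G U t) by split; [exists (dtg G t (tang x) w)|exact: hub].
have Dw : dtg G t (tang x) w <= sup (dtg_set G U t) := sup_upper_bound hS inS.
have /andP[hf1 _] := hf t xr.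
have tI : t \in `[0, r].
  by case/andP: xr => t0 tr; rewrite in_itv /= t0 ltW.
have hct := cmin t tI.
have n1 : hh f c \in Num.nneg by rewrite nnegrE; exact: (ltW hc0).
have n2 : hh f t \in Num.nneg by rewrite nnegrE; exact: (ltW h0).
have h3 := lerXn2r 3 n1 n2 hct.
rewrite xi0 Dv.
exact: (@final_ineq R _ _ _ _ _ _ d0 hc0 h0 h3 hf1 Dw).
Qed.
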